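(* Let $\lambda_0,\lambda_1$ be real and $a<b$. The smallest constant $C$ such that every $f\in C^2[a,b]$ with $f(a)=f(b)=0$ satisfies $|f(t)|\le C\max_{\theta\in[a,b]}|L_{(\lambda_0,\lambda_1)}f(\theta)|$ for all $t\in[a,b]$ is $C=M^{a,b}_{\lambda_0,\lambda_1}$. Moreover $\Omega^{a,b}_{\lambda_0,\lambda_1,0}(t)>0$ for all $t\in(a,b)$.
   Context: For real $\lambda_0,\dots,\lambda_N$, $L_{(\lambda_0,\dots,\lambda_N)}=\prod_{j=0}^N(\frac{d}{dt}-\lambda_j)$ and $E(\lambda_0,\dots,\lambda_N)=\{f\in C^{N+1}(\mathbb{R}):L_{(\lambda_0,\dots,\lambda_N)}f=0\}$. For real $\lambda_0,\lambda_1$ and $a<b$, $\Omega^{a,b}_{\lambda_0,\lambda_1,0}$ denotes the unique $u\in E(\lambda_0,\lambda_1,0)$ with $u(a)=u(b)=0$ and $L_{(\lambda_0,\lambda_1)}u\equiv-1$, and $M^{a,b}_{\lambda_0,\lambda_1}:=\max_{t\in[a,b]}|\Omega^{a,b}_{\lambda_0,\lambda_1,0}(t)|$. *)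

(* Defs.v *)
From Stdlib Require Import Reals Lra List.
From Coquelicot Require Import Coquelicot.
Import ListNotations.
Open Scope R_scope.

Definition Dm (lam : R) (f : R -> R) : R -> R :=
  fun t => Derive f t - lam * f t.

Definition Lop (ls : list R) (f : R -> R) : R -> R := fold_right Dm f ls.

Definition Ck (k : nat) (f : R -> R) : Prop :=
  (forall (n : nat) (x : R), (n <= k)%nat -> ex_derive_n f n x) /\
  (forall x : R, continuous (Derive_n f k) x).

(** E(lam_0,...,lam_N) : C^{N+1}(R) solutions of L f = 0 (N+1 = length ls) *)
Definition Espace (ls : list R) (f : R -> R) : Prop :=
  Ck (length ls) f /\ forall t, Lop ls f t = 0.

Definition is_Omega (a b lam0 lam1 : R) (u : R -> R) : Prop :=
  Espace [lam0; lam1; 0] u /\ u a = 0 /\ u b = 0 /\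
  (forall t, Lop [lam0; lam1] u t = -1).

Definition sup_on (a b : R) (h : R -> R) : R :=
  real (Lub_Rbar (fun y => exists t, a <= t <= b /\ y = h t)).

(** g is the derivative of f on [a,b] (one-sided at the endpoints) *)
Definition has_deriv_on (a b : R) (f g : R -> R) : Prop :=
  forall t, a <= t <= b -> forall eps, 0 < eps -> exists delta, 0 < delta /\
    forall s, a <= s <= b -> 0 < Rabs (s - t) < delta ->
      Rabs ((f s - f t) / (s - t) - g t) < eps.

Definition cont_on (a b : R) (g : R -> R) : Prop :=
  forall t, a <= t <= b -> forall eps, 0 < eps -> exists delta, 0 < delta /\
    forall s, a <= s <= b -> Rabs (s - t) < delta -> Rabs (g s - g t) < eps.

Definition C2_on (a b : R) (f f1 f2 : R -> R) : Prop :=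
  has_deriv_on a b f f1 /\ has_deriv_on a b f1 f2 /\ cont_on a b f2.

(** L_(lam0,lam1) f = (D - lam0)(D - lam1) f on [a,b], for f in C^2[a,b] *)
Definition L2_on (lam0 lam1 : R) (f f1 f2 : R -> R) : R -> R :=
  fun t => (f2 t - lam1 * f1 t) - lam0 * (f1 t - lam1 * f t).

Definition admissible_const (a b lam0 lam1 C : R) : Prop :=
  forall f f1 f2 : R -> R, C2_on a b f f1 f2 -> f a = 0 -> f b = 0 ->
    forall t, a <= t <= b ->
      Rabs (f t) <= C * sup_on a b (fun th => Rabs (L2_on lam0 lam1 f f1 f2 th)).

(* Main.v *)
Require Import Defs.
From Stdlib Require Import Reals Lra Lia List.
Import ListNotations.
From Coquelicot Require Import Coquelicot.
Open Scope R_scope.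

Definition clamp (a b x : R) := Rmax a (Rmin b x).

Lemma clamp_in a b x : a <= b -> a <= clamp a b x <= b.
Proof. intros. unfold clamp, Rmax, Rmin. repeat destruct Rle_dec; lra. Qed.

Lemma clamp_id a b x : a <= x <= b -> clamp a b x = x.
Proof. intros. unfold clamp, Rmax, Rmin. repeat destruct Rle_dec; lra. Qed.

Lemma clamp_lip a b s x : a <= b -> Rabs (clamp a b s - clamp a b x) <= Rabs (s - x).
Proof. intros. unfold clamp, Rmax, Rmin, Rabs. repeat destruct Rle_dec; repeat destruct Rcase_abs; lra. Qed.

Lemma cont_clamp a b g : a <= b -> cont_on a b g ->
  forall x, continuity_pt (fun s => g (clamp a b s)) x.
Proof.
intros hab Hc x. unfold continuity_pt, continue_in, limit1_in, limit_in.
intros eps He.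
destruct (Hc (clamp a b x) (clamp_in a b x hab) eps He) as [d [Hd H]].
exists d; split; auto. intros s [_ Hs]. simpl in *. unfold R_dist in *.
apply H. apply clamp_in; auto.
eapply Rle_lt_trans; [apply clamp_lip; auto| exact Hs].
Qed.

Lemma hd_cont a b f g : has_deriv_on a b f g -> cont_on a b f.
Proof.
intros Hd t Ht eps He.
destruct (Hd t Ht 1 Rlt_0_1) as [d [Hd0 H]].
set (M := Rabs (g t) + 1).
assert (HM : 0 < M) by (unfold M; pose proof (Rabs_pos (g t)); lra).
exists (Rmin d (eps / M)). split.
{ apply Rmin_pos; auto. apply Rdiv_lt_0_compat; auto. }
intros s Hs Hst.
destruct (Req_dec s t) as [->|Hne].
{ replace (f t - f t) with 0 by ring. rewrite Rabs_R0; auto. }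
assert (H0 : 0 < Rabs (s - t)) by (apply Rabs_pos_lt; lra).
assert (Hst1 : Rabs (s - t) < d) by (eapply Rlt_le_trans; [exact Hst| apply Rmin_l]).
assert (Hst2 : Rabs (s - t) < eps / M) by (eapply Rlt_le_trans; [exact Hst| apply Rmin_r]).
specialize (H s Hs (conj H0 Hst1)).
set (q := (f s - f t) / (s - t)) in H.
assert (Hq : Rabs q < M).
{ unfold M. pose proof (Rabs_triang (q - g t) (g t)).
  replace (q - g t + g t) with q in H1 by ring. lra. }
replace (f s - f t) with (q * (s - t)) by (unfold q; field; lra).
rewrite Rabs_mult.
apply Rlt_le_trans with (M * Rabs (s - t)).
{ apply Rmult_lt_compat_r; auto. }
apply Rle_trans with (M * (eps / M)).
{ apply Rmult_le_compat_l; lra. }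
right; field; lra.
Qed.

Lemma hd_derive a b f g t : has_deriv_on a b f g -> a < t < b ->
  is_derive (fun s => f (clamp a b s)) t (g t).
Proof.
intros Hd Ht. apply is_derive_Reals. intros eps He.
destruct (Hd t (conj (Rlt_le _ _ (proj1 Ht)) (Rlt_le _ _ (proj2 Ht))) eps He) as [d [Hd0 H]].
assert (Hp : 0 < Rmin d (Rmin (t - a) (b - t))).
{ repeat apply Rmin_pos; lra. }
exists (mkposreal _ Hp). intros h Hh Hhd. simpl in Hhd.
assert (h1 : Rabs h < d) by (eapply Rlt_le_trans; [exact Hhd| apply Rmin_l]).
assert (h2 : Rabs h < Rmin (t - a) (b - t)) by (eapply Rlt_le_trans; [exact Hhd| apply Rmin_r]).
assert (h3 : Rabs h < t - a) by (eapply Rlt_le_trans; [exact h2| apply Rmin_l]).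
assert (h4 : Rabs h < b - t) by (eapply Rlt_le_trans; [exact h2| apply Rmin_r]).
assert (Hin : a <= t + h <= b).
{ revert h3 h4; unfold Rabs; destruct Rcase_abs; intros; lra. }
rewrite (clamp_id a b (t+h)) by auto. rewrite (clamp_id a b t) by lra.
replace h with (t + h - t) at 2 by ring.
apply H; auto. replace (t + h - t) with h by ring. split; auto.
apply Rabs_pos_lt; auto.
Qed.

Lemma mvt_strict F dF x y : x < y ->
  (forall c, x < c < y -> is_derive F c (dF c)) ->
  (forall c, x <= c <= y -> continuity_pt F c) ->
  exists c, x < c < y /\ F y - F x = dF c * (y - x).
Proof.
intros hxy Hd Hc.
set (pr1 := fun c (Hc : x < c < y) => exist (fun l => derivable_pt_lim F c l) (dF c)
   (proj1 (is_derive_Reals _ _ _) (Hd c Hc))).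
set (pr2 := fun c (_ : x < c < y) => derivable_pt_id c).
destruct (MVT F id x y pr1 pr2 hxy Hc) as [c [P Heq]].
{ intros; apply derivable_continuous_pt, derivable_pt_id. }
exists c; split; auto.
rewrite (derive_pt_eq_0 F c (dF c) (pr1 c P)) in Heq by (apply is_derive_Reals; auto).
rewrite (derive_pt_eq_0 id c 1 (pr2 c P)) in Heq by (apply derivable_pt_lim_id).
unfold id in Heq. lra.
Qed.

Lemma sup_on_ub a b h B : (forall t, a<=t<=b -> h t <= B) ->
  forall t, a<=t<=b -> h t <= sup_on a b h.
Proof.
intros HB t Ht. unfold sup_on.
destruct (Lub_Rbar_correct (fun y => exists t, a <= t <= b /\ y = h t)) as [Hub Hl].
assert (H1 : Rbar_le (h t) (Lub_Rbar (fun y => exists t, a <= t <= b /\ y = h t))).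
{ apply Hub. exists t; split; auto. }
assert (H2 : Rbar_le (Lub_Rbar (fun y => exists t, a <= t <= b /\ y = h t)) B).
{ apply Hl. intros y [s [Hs ->]]. simpl. apply HB; auto. }
destruct (Lub_Rbar _) as [l| |]; simpl in *; try contradiction; lra.
Qed.

Lemma sup_on_le a b h C : a <= b -> (forall t, a<=t<=b -> h t <= C) ->
  sup_on a b h <= C.
Proof.
intros hab HB. unfold sup_on.
destruct (Lub_Rbar_correct (fun y => exists t, a <= t <= b /\ y = h t)) as [Hub Hl].
assert (H1 : Rbar_le (h a) (Lub_Rbar (fun y => exists t, a <= t <= b /\ y = h t))).
{ apply Hub. exists a; split; auto; lra. }
assert (H2 : Rbar_le (Lub_Rbar (fun y => exists t, a <= t <= b /\ y = h t)) C).
{ apply Hl. intros y [s [Hs ->]]. simpl. apply HB; auto. }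
destruct (Lub_Rbar _) as [l| |]; simpl in *; try contradiction; lra.
Qed.

Lemma der_val (f : R -> R) (x l l' : R) : is_derive f x l -> l = l' -> is_derive f x l'.
Proof. intros H ->; auto. Qed.

Lemma der_mul (f g : R -> R) (x df dg : R) : is_derive f x df -> is_derive g x dg ->
  is_derive (fun t => f t * g t) x (df * g x + f x * dg).
Proof. intros H1 H2. apply (is_derive_mult f g x df dg H1 H2). intros; apply Rmult_comm. Qed.

Lemma der_sub (f g : R -> R) (x df dg : R) : is_derive f x df -> is_derive g x dg ->
  is_derive (fun t => f t - g t) x (df - dg).
Proof. intros H1 H2. apply (is_derive_minus f g x df dg H1 H2). Qed.

Lemma der_add (f g : R -> R) (x df dg : R) : is_derive f x df -> is_derive g x dg ->
  is_derive (fun t => f t + g t) x (df + dg).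
Proof. intros H1 H2. apply (is_derive_plus f g x df dg H1 H2). Qed.

Lemma der_expc c x : is_derive (fun t => exp (c * t)) x (c * exp (c * x)).
Proof. auto_derive; auto; ring. Qed.

Lemma cont_mul (f g : R -> R) (x : R) : continuous f x -> continuous g x -> continuous (fun t => f t * g t) x.
Proof. intros; apply (continuous_mult f g x); auto. Qed.

Lemma cont_sub (f g : R -> R) (x : R) : continuous f x -> continuous g x -> continuous (fun t => f t - g t) x.
Proof. intros; apply (continuous_minus f g x); auto. Qed.

Lemma cont_expc c x : continuous (fun t => exp (c * t)) x.
Proof. apply (ex_derive_continuous (K:=R_AbsRing) (V:=R_NormedModule)). eexists. apply der_expc. Qed.

Lemma cont_const (k x : R) : @continuous R_UniformSpace R_UniformSpace (fun _ : R => k) x.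
Proof. apply (continuous_const (U:=R_UniformSpace) (V:=R_UniformSpace)). Qed.

Section Core.
Variables (a b l0 l1 : R) (G G1 G2 : R -> R).
Hypothesis hab : a < b.
Hypothesis HGc : forall x, continuous G x.
Hypothesis HG1c : forall x, continuous G1 x.
Hypothesis HGd : forall x, a < x < b -> is_derive G x (G1 x).
Hypothesis HG1d : forall x, a < x < b -> is_derive G1 x (G2 x).
Hypothesis Ga : G a = 0.
Hypothesis Gb : G b = 0.

Let H x := exp (-l1 * x) * G x.
Let dH x := exp (-l1 * x) * (G1 x - l1 * G x).
Let W x := exp (-l0 * x) * (G1 x - l1 * G x).
Let LG x := (G2 x - l1 * G1 x) - l0 * (G1 x - l1 * G x).
Let dW x := exp (-l0 * x) * LG x.

Lemma H_der x : a < x < b -> is_derive H x (dH x).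
Proof.
intros Hx. unfold H, dH. eapply der_val. apply der_mul; [apply der_expc| apply HGd; auto].
cbv beta; ring.
Qed.

Lemma W_der x : a < x < b -> is_derive W x (dW x).
Proof.
intros Hx. unfold W, dW, LG. eapply der_val. apply der_mul; [apply der_expc|].
apply der_sub; [apply HG1d; auto| apply is_derive_scal; apply HGd; auto].
cbv beta; ring.
Qed.

Lemma H_cont x : continuity_pt H x.
Proof. apply continuity_pt_filterlim. apply cont_mul; [apply cont_expc| apply HGc]. Qed.

Lemma W_cont x : continuity_pt W x.
Proof. apply continuity_pt_filterlim. apply cont_mul; [apply cont_expc|].
apply cont_sub; [apply HG1c|]. apply (cont_mul (fun _ => l1) G); [apply cont_const| apply HGc]. Qed.

Lemma core_gen (strict : bool) :
  (forall x, a < x < b -> if strict then LG x < 0 else LG x <= 0) ->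
  forall t, a < t < b -> if strict then 0 < G t else 0 <= G t.
Proof.
intros HL t Ht.
assert (Hneg : (if strict then H t <= 0 else H t < 0) -> False).
2:{ destruct strict; unfold H in Hneg.
    - destruct (Rle_or_lt (G t) 0); auto. exfalso; apply Hneg.
      pose proof (exp_pos (-l1*t)). nra.
    - destruct (Rle_or_lt 0 (G t)); auto. exfalso; apply Hneg.
      pose proof (exp_pos (-l1*t)). nra. }
assert (HHa : H a = 0) by (unfold H; rewrite Ga; ring).
assert (HHb : H b = 0) by (unfold H; rewrite Gb; ring).
intros Ht0.
destruct (mvt_strict H dH a t (proj1 Ht)) as [c [Hc Hc']].
{ intros; apply H_der; lra. } { intros; apply H_cont. }
destruct (mvt_strict H dH t b (proj2 Ht)) as [d [Hd Hd']].
{ intros; apply H_der; lra. } { intros; apply H_cont. }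
assert (hcd : c < d) by lra.
destruct (mvt_strict W dW c d hcd) as [e [He He']].
{ intros; apply W_der; lra. } { intros; apply W_cont. }
specialize (HL e ltac:(lra)).
pose proof (exp_pos (-l0 * e)).
pose proof (exp_pos (-l1 * c)). pose proof (exp_pos (-l1 * d)).
pose proof (exp_pos (-l0 * c)). pose proof (exp_pos (-l0 * d)).
unfold dH, dW, W in *. rewrite HHa in Hc'. rewrite HHb in Hd'.
assert (Pc : 0 < exp (- l1 * c) * (t - a)) by (apply Rmult_lt_0_compat; lra).
assert (Pd : 0 < exp (- l1 * d) * (b - t)) by (apply Rmult_lt_0_compat; lra).
assert (Pe : 0 < (d - c)) by lra.
replace (exp (- l1 * c) * (G1 c - l1 * G c) * (t - a)) with
  ((exp (- l1 * c) * (t - a)) * (G1 c - l1 * G c)) in Hc' by ring.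
replace (exp (- l1 * d) * (G1 d - l1 * G d) * (b - t)) with
  ((exp (- l1 * d) * (b - t)) * (G1 d - l1 * G d)) in Hd' by ring.
destruct strict.
- assert (G1 c - l1 * G c <= 0).
  { destruct (Rle_or_lt (G1 c - l1 * G c) 0); auto. nra. }
  assert (0 <= G1 d - l1 * G d).
  { destruct (Rle_or_lt 0 (G1 d - l1 * G d)); auto. nra. }
  assert (exp (- l0 * e) * LG e < 0) by nra.
  nra.
- assert (G1 c - l1 * G c < 0).
  { destruct (Rle_or_lt 0 (G1 c - l1 * G c)); auto. nra. }
  assert (0 < G1 d - l1 * G d).
  { destruct (Rle_or_lt (G1 d - l1 * G d) 0); auto. nra. }
  assert (exp (- l0 * e) * LG e <= 0) by nra.
  nra.
Qed.
End Core.

Lemma cont_pt (f : R -> R) x : continuous f x -> continuity_pt f x.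
Proof. intros; apply continuity_pt_filterlim; auto. Qed.

Lemma pt_cont (f : R -> R) x : continuity_pt f x -> continuous f x.
Proof. intros; apply continuity_pt_filterlim; auto. Qed.

Lemma der_cont (f : R -> R) x l : is_derive f x l -> continuous f x.
Proof. intros H. apply (ex_derive_continuous (K:=R_AbsRing) (V:=R_NormedModule)). exists l; auto. Qed.

Lemma bounded_on (h : R -> R) a b : a <= b -> (forall x, continuous h x) ->
  exists B, forall t, a <= t <= b -> h t <= B.
Proof.
intros hab Hc. destruct (continuity_ab_maj h a b hab) as [Mx [HM _]].
{ intros; apply cont_pt; auto. }
exists (h Mx); auto.
Qed.

Lemma cont_cont_on (g : R -> R) a b : (forall x, continuous g x) -> cont_on a b g.
Proof.
intros Hc t _ eps He. pose proof (cont_pt g t (Hc t)) as H.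
unfold continuity_pt, continue_in, limit1_in, limit_in in H.
destruct (H eps He) as [d [Hd H']]. exists d; split; auto.
intros s _ Hs. destruct (Req_dec s t) as [->|Hne].
{ replace (g t - g t) with 0 by ring; rewrite Rabs_R0; auto. }
apply (H' s). split; [unfold D_x, no_cond; split; auto| exact Hs].
Qed.

Lemma der_hd (F F' : R -> R) a b : (forall x, is_derive F x (F' x)) -> has_deriv_on a b F F'.
Proof.
intros Hd t _ eps He. destruct (proj1 (is_derive_Reals _ _ _) (Hd t) eps He) as [d H].
exists d; split; [apply cond_pos|].
intros s _ [H0 H1]. specialize (H (s - t)).
replace (t + (s - t)) with s in H by ring. apply H; auto.
intro Heq; rewrite Heq, Rabs_R0 in H0; lra.
Qed.

Lemma Ck3_facts u : Ck 3 u ->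
  (forall x, is_derive u x (Derive u x)) /\
  (forall x, is_derive (Derive u) x (Derive (Derive u) x)) /\
  (forall x, continuous (Derive (Derive u)) x).
Proof.
intros [Hd _]. split; [|split].
- intros x. apply Derive_correct. apply (Hd 1%nat x). auto.
- intros x. apply Derive_correct. apply (Hd 2%nat x). auto.
- intros x. apply (ex_derive_continuous (K:=R_AbsRing) (V:=R_NormedModule)).
  apply (Hd 3%nat x). auto.
Qed.

Lemma Lop2_eq u u1 u2 l0 l1 : (forall x, is_derive u x (u1 x)) ->
  (forall x, is_derive u1 x (u2 x)) ->
  forall t, Lop [l0; l1] u t = (u2 t - l1 * u1 t) - l0 * (u1 t - l1 * u t).
Proof.
intros H1 H2 t. unfold Lop. simpl. unfold Dm.
rewrite (Derive_ext _ (fun s => u1 s - l1 * u s)).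
2:{ intros s. rewrite (is_derive_unique u s (u1 s)); auto. }
rewrite (is_derive_unique u t (u1 t)) by auto.
rewrite (is_derive_unique _ t (u2 t - l1 * u1 t)); auto.
apply der_sub; auto. apply is_derive_scal; auto.
Qed.

Lemma Lop3_eq u u1 u2 u3 l0 l1 : (forall x, is_derive u x (u1 x)) ->
  (forall x, is_derive u1 x (u2 x)) -> (forall x, is_derive u2 x (u3 x)) ->
  forall t, Lop [l0; l1; 0] u t = (u3 t - l1 * u2 t) - l0 * (u2 t - l1 * u1 t).
Proof.
intros H1 H2 H3 t.
assert (E : forall s, Dm 0 u s = u1 s).
{ intros s. unfold Dm. rewrite (is_derive_unique u s (u1 s)); auto. ring. }
unfold Lop. simpl.
assert (E2 : forall s, Dm l1 (Dm 0 u) s = u2 s - l1 * u1 s).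
{ intros s. unfold Dm at 1. rewrite (Derive_ext _ u1) by auto. rewrite E.
  rewrite (is_derive_unique u1 s (u2 s)); auto. }
unfold Dm at 1. rewrite (Derive_ext _ (fun s => u2 s - l1 * u1 s)) by auto.
rewrite E2.
rewrite (is_derive_unique _ t (u3 t - l1 * u2 t)); auto.
apply der_sub; auto. apply is_derive_scal; auto.
Qed.

Lemma smooth3 u u1 u2 u3 : (forall x, is_derive u x (u1 x)) ->
  (forall x, is_derive u1 x (u2 x)) -> (forall x, is_derive u2 x (u3 x)) ->
  (forall x, continuous u3 x) -> Ck 3 u.
Proof.
intros H1 H2 H3 H4.
assert (D1 : forall x, Derive_n u 1 x = u1 x).
{ intros x; simpl. apply is_derive_unique; auto. }
assert (D2 : forall x, Derive_n u 2 x = u2 x).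
{ intros x; simpl. rewrite (Derive_ext _ u1). apply is_derive_unique; auto.
  intros; apply is_derive_unique; auto. }
assert (D3 : forall x, Derive_n u 3 x = u3 x).
{ intros x. change (Derive (Derive_n u 2) x = u3 x).
  rewrite (Derive_ext _ u2) by auto. apply is_derive_unique; auto. }
split.
- intros n x Hn. destruct n as [|[|[|[|n]]]]; try lia; simpl ex_derive_n.
  + exact I.
  + exists (u1 x); auto.
  + apply (ex_derive_ext u1); [intros; symmetry; apply D1|]. exists (u2 x); auto.
  + apply (ex_derive_ext u2); [intros; symmetry; apply D2|]. exists (u3 x); auto.
- intros x. apply (continuous_ext u3); [intros; symmetry; apply D3| auto].
Qed.

Lemma der_RInt (f : R -> R) a t : (forall x, continuous f x) ->
  is_derive (fun s => RInt f a s) t (f t).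
Proof.
intros Hc. apply (is_derive_RInt f (fun s => RInt f a s) a t).
- apply filter_forall. intros y. apply (RInt_correct (V:=R_CompleteNormedModule)).
  apply ex_RInt_continuous. intros; apply Hc.
- apply Hc.
Qed.

Lemma exp_cancel c x : exp (c * x) * exp (- c * x) = 1.
Proof. rewrite <- exp_plus. replace (c * x + - c * x) with 0 by ring. apply exp_0. Qed.

Section Exist.
Variables (l0 l1 a b : R).
Hypothesis hab : a < b.

Let P t := RInt (fun r => exp (- l0 * r)) a t.
Let e1 s := exp (- l1 * s) * exp (l0 * s).

Lemma P_der t : is_derive P t (exp (- l0 * t)).
Proof. apply (der_RInt (fun r => exp (- l0 * r))). intros; apply cont_expc. Qed.

Lemma P_cont t : continuous P t.
Proof. eapply der_cont; apply P_der. Qed.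

Let Q (al : R) t := exp (l0 * t) * (al - P t).

Lemma Q_der al t : is_derive (Q al) t (l0 * Q al t - 1).
Proof.
unfold Q. eapply der_val. apply der_mul; [apply der_expc|].
apply der_sub; [apply (is_derive_const (K:=R_AbsRing) (V:=R_NormedModule))| apply P_der].
cbv beta. rewrite <- (exp_cancel l0 t). unfold zero; simpl. ring.
Qed.

Lemma Q_cont al t : continuous (Q al) t.
Proof. eapply der_cont; apply Q_der. Qed.

Let g al s := exp (- l1 * s) * Q al s.

Lemma g_cont al t : continuous (g al) t.
Proof. apply cont_mul; [apply cont_expc| apply Q_cont]. Qed.

Let u al t := exp (l1 * t) * RInt (g al) a t.
Let u1 al t := l1 * u al t + Q al t.
Let u2 al t := l1 * u1 al t + (l0 * Q al t - 1).
Let u3 al t := l1 * u2 al t + l0 * (l0 * Q al t - 1).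

Lemma u_der al t : is_derive (u al) t (u1 al t).
Proof.
unfold u, u1, u. eapply der_val. apply der_mul; [apply der_expc| apply der_RInt; apply g_cont].
cbv beta. unfold g. replace (exp (l1 * t) * (exp (- l1 * t) * Q al t)) with
  ((exp (l1 * t) * exp (- l1 * t)) * Q al t) by ring. rewrite exp_cancel. ring.
Qed.

Lemma u1_der al t : is_derive (u1 al) t (u2 al t).
Proof.
unfold u1, u2. apply der_add; [apply is_derive_scal, u_der| apply Q_der].
Qed.

Lemma u2_der al t : is_derive (u2 al) t (u3 al t).
Proof.
unfold u2, u3. apply der_add; [apply is_derive_scal, u1_der|].
eapply der_val. apply der_sub; [apply is_derive_scal, Q_der| apply (is_derive_const (K:=R_AbsRing) (V:=R_NormedModule))].
unfold zero; simpl; ring.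
Qed.

Lemma u3_cont al t : continuous (u3 al) t.
Proof.
unfold u3. apply (continuous_plus (U:=R_UniformSpace) (V:=R_NormedModule)).
- apply (cont_mul (fun _ => l1)); [apply cont_const| eapply der_cont; apply u2_der].
- apply (cont_mul (fun _ => l0)); [apply cont_const|].
  apply cont_sub; [apply (cont_mul (fun _ => l0)); [apply cont_const| apply Q_cont]| apply cont_const].
Qed.

Lemma e1_cont t : continuous e1 t.
Proof. apply cont_mul; apply cont_expc. Qed.

Lemma exists_Omega : exists v, is_Omega a b l0 l1 v.
Proof.
set (I1 := RInt e1 a b).
set (I2 := RInt (fun s => e1 s * P s) a b).
assert (HI1 : 0 < I1).
{ apply RInt_gt_0; auto.
  - intros; unfold e1; apply Rmult_lt_0_compat; apply exp_pos.
  - intros; apply e1_cont. }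
set (al := I2 / I1).
exists (u al).
assert (Hb : RInt (g al) a b = 0).
{ rewrite (RInt_ext _ (fun s => minus (scal al (e1 s)) (e1 s * P s))).
  2:{ intros x _. unfold g, Q, e1, minus, plus, opp, scal; simpl.
      unfold mult; simpl. ring. }
  rewrite (RInt_minus (V:=R_CompleteNormedModule) (fun s => scal al (e1 s)) (fun s => e1 s * P s)).
  - rewrite (RInt_scal (V:=R_CompleteNormedModule) e1). fold I1. fold I2. unfold al, minus, plus, opp, scal; simpl.
    unfold mult; simpl. field. lra.
    apply ex_RInt_continuous; intros; apply e1_cont.
  - apply (ex_RInt_scal (V:=R_CompleteNormedModule)).
    apply ex_RInt_continuous; intros; apply e1_cont.
  - apply ex_RInt_continuous; intros; apply cont_mul; [apply e1_cont| apply P_cont]. }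
assert (L2 : forall t, Lop [l0; l1] (u al) t = -1).
{ intros t. rewrite (Lop2_eq _ (u1 al) (u2 al)); [| apply u_der| apply u1_der].
  unfold u2, u1. ring. }
split; [split|split;[|split]].
- simpl. apply (smooth3 _ (u1 al) (u2 al) (u3 al)); intros; [apply u_der|apply u1_der|apply u2_der|apply u3_cont].
- intros t. rewrite (Lop3_eq _ (u1 al) (u2 al) (u3 al)); [| apply u_der| apply u1_der| apply u2_der].
  unfold u3, u2, u1. ring.
- unfold u. rewrite RInt_point. unfold zero; simpl; ring.
- unfold u. rewrite Hb. ring.
- exact L2.
Qed.
End Exist.

Lemma adm_sigma (l0 l1 a b : R) (hab : a < b) (u : R -> R)
  (Hu1 : forall x, is_derive u x (Derive u x))
  (Hu2 : forall x, is_derive (Derive u) x (Derive (Derive u) x))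
  (HL : forall x, (Derive (Derive u) x - l1 * Derive u x) - l0 * (Derive u x - l1 * u x) = -1)
  (ua : u a = 0) (ub : u b = 0)
  (f f1 f2 : R -> R) (K : R) (HC : C2_on a b f f1 f2) (fa : f a = 0) (fb : f b = 0)
  (HK : forall th, a <= th <= b -> Rabs (L2_on l0 l1 f f1 f2 th) <= K)
  (sg : R) (Hs : sg = 1 \/ sg = -1) :
  forall t, a < t < b -> 0 <= K * u t - sg * f t.
Proof.
destruct HC as [Hf [Hf1 Hf2]].
intros t Ht.
assert (hab' : a <= b) by lra.
pose proof (core_gen a b l0 l1
  (fun s => K * u s - sg * f (clamp a b s))
  (fun s => K * Derive u s - sg * f1 (clamp a b s))
  (fun s => K * Derive (Derive u) s - sg * f2 s)) as Hcore.
assert (Hfin : 0 <= K * u t - sg * f (clamp a b t)).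
2:{ rewrite clamp_id in Hfin; lra. }
refine (Hcore _ _ _ _ _ _ false _ t Ht); clear Hcore; cbv beta.
- intros x. apply cont_sub.
  + apply (cont_mul (fun _ => K)); [apply cont_const| eapply der_cont; apply Hu1].
  + apply (cont_mul (fun _ => sg)); [apply cont_const| apply pt_cont].
    apply cont_clamp; auto. eapply hd_cont; eauto.
- intros x. apply cont_sub.
  + apply (cont_mul (fun _ => K)); [apply cont_const| eapply der_cont; apply Hu2].
  + apply (cont_mul (fun _ => sg)); [apply cont_const| apply pt_cont].
    apply cont_clamp; auto. eapply hd_cont; eauto.
- intros x Hx. eapply der_val. apply der_sub; apply is_derive_scal;
  [apply Hu1| apply (hd_derive a b f f1 x Hf Hx)].
  rewrite clamp_id by lra. auto.
- intros x Hx. apply der_sub; apply is_derive_scal;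
  [apply Hu2| apply (hd_derive a b f1 f2 x Hf1 Hx)].
- rewrite clamp_id by lra. rewrite ua, fa. ring.
- rewrite clamp_id by lra. rewrite ub, fb. ring.
- intros x Hx. cbv beta. rewrite !clamp_id by lra.
  specialize (HK x ltac:(lra)). specialize (HL x).
  unfold L2_on in HK.
  set (Lf := f2 x - l1 * f1 x - l0 * (f1 x - l1 * f x)) in HK.
  assert (E : K * Derive (Derive u) x - sg * f2 x - l1 * (K * Derive u x - sg * f1 x) -
    l0 * (K * Derive u x - sg * f1 x - l1 * (K * u x - sg * f x)) =
    K * ((Derive (Derive u) x - l1 * Derive u x) - l0 * (Derive u x - l1 * u x)) - sg * Lf)
    by (unfold Lf; ring).
  rewrite E, HL.
  pose proof (Rle_abs Lf). pose proof (Rle_abs (- Lf)). rewrite Rabs_Ropp in H0.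
  destruct Hs; subst sg; lra.
Qed.

Theorem mainTheorem4 (lam0 lam1 a b : R) (hab : a < b) :
  (exists u, is_Omega a b lam0 lam1 u) /\
  forall u, is_Omega a b lam0 lam1 u ->
    (admissible_const a b lam0 lam1 (sup_on a b (fun t => Rabs (u t))) /\
     forall C, admissible_const a b lam0 lam1 C ->
       sup_on a b (fun t => Rabs (u t)) <= C) /\
    (forall t, a < t < b -> 0 < u t).
Proof.
split; [apply exists_Omega; auto|].
intros u [[Hck _] [ua [ub HLop]]].
simpl in Hck.
destruct (Ck3_facts u Hck) as [Hu1 [Hu2 Hu3]].
assert (HL : forall x, (Derive (Derive u) x - lam1 * Derive u x) - lam0 * (Derive u x - lam1 * u x) = -1).
{ intros x. rewrite <- (Lop2_eq u (Derive u) (Derive (Derive u)) lam0 lam1 Hu1 Hu2 x). auto. }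
assert (hab' : a <= b) by lra.
assert (Hucont : forall x, continuous u x) by (intros; eapply der_cont; apply Hu1).
destruct (bounded_on (fun t => Rabs (u t)) a b hab') as [Bu HBu].
{ intros x. apply continuous_Rabs_comp. auto. }
assert (HuM : forall t, a <= t <= b -> Rabs (u t) <= sup_on a b (fun t => Rabs (u t))).
{ apply (sup_on_ub a b _ Bu HBu). }
split; [split|].
-
  intros f f1 f2 HC fa fb t Ht.
  set (K := sup_on a b (fun th => Rabs (L2_on lam0 lam1 f f1 f2 th))).
  destruct HC as [Hf [Hf1 Hf2]].
  assert (HLc : forall x, continuous (fun s => Rabs (L2_on lam0 lam1 f f1 f2 (clamp a b s))) x).
  { intros x. apply continuous_Rabs_comp. unfold L2_on.
    assert (cf : forall g, cont_on a b g -> continuous (fun s => g (clamp a b s)) x).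
    { intros g Hg. apply pt_cont. apply cont_clamp; auto. }
    apply cont_sub; [apply cont_sub|].
    - apply cf; auto.
    - apply (cont_mul (fun _ => lam1)); [apply cont_const| apply cf; eapply hd_cont; eauto].
    - apply (cont_mul (fun _ => lam0)); [apply cont_const|].
      apply cont_sub; [apply cf; eapply hd_cont; eauto|].
      apply (cont_mul (fun _ => lam1)); [apply cont_const| apply cf; eapply hd_cont; eauto]. }
  destruct (bounded_on _ a b hab' HLc) as [BL HBL].
  assert (HK : forall th, a <= th <= b -> Rabs (L2_on lam0 lam1 f f1 f2 th) <= K).
  { apply (sup_on_ub a b _ BL). intros th Hth. specialize (HBL th Hth).
    rewrite clamp_id in HBL; auto. }
  assert (K0 : 0 <= K) by (eapply Rle_trans; [apply Rabs_pos| apply (HK a); lra]).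
  assert (M0 : 0 <= sup_on a b (fun t => Rabs (u t)))
    by (eapply Rle_trans; [apply Rabs_pos| apply (HuM a); lra]).
  destruct (Req_dec t a) as [->|Hta].
  { rewrite fa, Rabs_R0. apply Rmult_le_pos; auto. }
  destruct (Req_dec t b) as [->|Htb].
  { rewrite fb, Rabs_R0. apply Rmult_le_pos; auto. }
  assert (Ht' : a < t < b) by lra.
  pose proof (adm_sigma lam0 lam1 a b hab u Hu1 Hu2 HL ua ub f f1 f2 K
     (conj Hf (conj Hf1 Hf2)) fa fb HK 1 (or_introl eq_refl) t Ht') as A1.
  pose proof (adm_sigma lam0 lam1 a b hab u Hu1 Hu2 HL ua ub f f1 f2 K
     (conj Hf (conj Hf1 Hf2)) fa fb HK (-1) (or_intror eq_refl) t Ht') as A2.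
  pose proof (HuM t Ht). pose proof (Rle_abs (u t)).
  assert (K * u t <= sup_on a b (fun t => Rabs (u t)) * K) by nra.
  unfold Rabs at 1; destruct Rcase_abs; lra.
-
  intros C HC.
  assert (Hc2 : C2_on a b u (Derive u) (Derive (Derive u))).
  { split; [|split].
    - apply der_hd; auto.
    - apply der_hd; auto.
    - apply cont_cont_on; auto. }
  assert (HS : sup_on a b (fun th => Rabs (L2_on lam0 lam1 u (Derive u) (Derive (Derive u)) th)) = 1).
  { assert (E : forall th, Rabs (L2_on lam0 lam1 u (Derive u) (Derive (Derive u)) th) = 1).
    { intros th. unfold L2_on. rewrite HL. unfold Rabs; destruct Rcase_abs; lra. }
    apply Rle_antisym.
    - apply sup_on_le; auto. intros; rewrite E; lra.
    - rewrite <- (E a). apply (sup_on_ub a b (fun th => Rabs (L2_on lam0 lam1 u (Derive u) (Derive (Derive u)) th)) 1); [intros; rewrite E; lra| lra]. }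
  apply sup_on_le; auto. intros t Ht.
  pose proof (HC u (Derive u) (Derive (Derive u)) Hc2 ua ub t Ht) as H.
  rewrite HS in H. lra.
-
  intros t Ht.
  apply (core_gen a b lam0 lam1 u (Derive u) (Derive (Derive u)) Hucont
    (fun x => der_cont _ _ _ (Hu2 x)) (fun x _ => Hu1 x) (fun x _ => Hu2 x) ua ub true); auto.
  intros x _. rewrite HL. lra.
Qed.
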